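(* Let $n\ge1$, let $q$ be an integer with $0<q\le n$, and let $f\colon\mathbb Z_2^n\to\mathbb Z_2^n$ be a map such that every $\vec y\in\mathbb Z_2^n$ has at most $2^q$ preimages under $f$. Then there is an even permutation $h$ of $\mathbb Z_2^{n+q}$ with at most $2^{n+1}$ non-fixed points such that $\psi_{n+q,n}(h(\phi_{n,n+q}(\vec x)))=f(\vec x)$ for all $\vec x\in\mathbb Z_2^n$; consequently $f$ can be implemented by a reversible circuit of NOT, CNOT and 2-CNOT gates on $n+q$ lines with $q$ additional inputs, i.e. $f\in F(n,q)$.
   Context: For $m\ge1$, a $k$-CNOT gate on $m$ lines with control lines $i_1,\dots,i_k$ and target line $j\notin\{i_1,\dots,i_k\}$ is the map $\mathbb Z_2^m\to\mathbb Z_2^m$ replacing $x_j$ by $x_j\oplus(x_{i_1}\wedge\dots\wedge x_{i_k})$ and leaving other coordinates unchanged; NOT, CNOT, 2-CNOT are the cases $k=0,1,2$. A reversible circuit on $m$ lines is a finite sequence of such gates and computes their composition $g$. With $\phi_{n,n+q}(\langle x_1,\dots,x_n\rangle)=\langle x_1,\dots,x_n,0,\dots,0\rangle$ and $\psi_{n+q,n}(\langle x_1,\dots,x_{n+q}\rangle)=\langle x_1,\dots,x_n\rangle$, such a circuit on $n+q$ lines implements $f\colon\mathbb Z_2^n\to\mathbb Z_2^n$ with $q$ additional inputs if $\psi_{n+q,n}(g(\phi_{n,n+q}(\vec x)))=f(\vec x)$ for all $\vec x$. $F(n,q)$ denotes the set of all maps $\mathbb Z_2^n\to\mathbb Z_2^n$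 implementable in this way. A non-fixed point of a permutation $h$ is a point $\vec x$ with $h(\vec x)\ne\vec x$. *)

(* Defs.v *)
From mathcomp Require Import all_boot all_order all_fingroup.
Set Implicit Arguments. Unset Strict Implicit. Unset Printing Implicit Defensive.

(* Z_2^m, encoded as boolean vectors indexed by lines 'I_m (true = 1, xor = (+)). *)
Definition bvec (m : nat) := {ffun 'I_m -> bool}.

Definition phi (n q : nat) (x : bvec n) : bvec (n + q) :=
  [ffun i : 'I_(n + q) => match split i with inl j => x j | inr _ => false end].

Definition psi (n q : nat) (y : bvec (n + q)) : bvec n :=
  [ffun j : 'I_n => y (lshift q j)].

Arguments phi n q x : clear implicits.
Arguments psi n q y : clear implicits.

(* A k-CNOT gate on m lines: a set of control lines (k = its size) and a target line. *)
Definition gate (m : nat) := ({set 'I_m} * 'I_m)%type.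

Definition gate_ok (m : nat) (g : gate m) : Prop := g.2 \notin g.1.

Definition gate_fun (m : nat) (g : gate m) (x : bvec m) : bvec m :=
  [ffun i : 'I_m => if i == g.2 then x i (+) [forall c in g.1, x c] else x i].

Definition circuit_fun (m : nat) (c : seq (gate m)) (x : bvec m) : bvec m :=
  foldl (fun y g => gate_fun g y) x c.

Definition F (n q : nat) (f : bvec n -> bvec n) : Prop :=
  exists c : seq (gate (n + q)),
    (forall g, g \in c -> gate_ok g /\ #|g.1| <= 2) /\
    (forall x : bvec n, psi n q (circuit_fun c (phi n q x)) = f x).
Arguments F n q f : clear implicits.

(* Main.v *)
Require Import Defs.
From mathcomp Require Import all_boot all_order all_fingroup.
From mathcomp Require Import zify.
Set Implicit Arguments. Unset Strict Implicit. Unset Printing Implicit Defensive.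


Definition good m (c : seq (gate m)) := forall g, g \in c -> gate_ok g /\ #|g.1| <= 2.
Definition realf m (phi : bvec m -> bvec m) :=
  exists c : seq (gate m), good c /\ forall x, circuit_fun c x = phi x.

Lemma good_cat m (c1 c2 : seq (gate m)) : good c1 -> good c2 -> good (c1 ++ c2).
Proof. by move=> h1 h2 g; rewrite mem_cat => /orP[/h1|/h2]. Qed.

Lemma good_rev m (c : seq (gate m)) : good c -> good (rev c).
Proof. by move=> h g; rewrite mem_rev => /h. Qed.

Lemma circuit_cat m (c1 c2 : seq (gate m)) x :
  circuit_fun (c1 ++ c2) x = circuit_fun c2 (circuit_fun c1 x).
Proof. by rewrite /circuit_fun foldl_cat. Qed.

Lemma circuit_cons m (g : gate m) c x :
  circuit_fun (g :: c) x = circuit_fun c (gate_fun g x).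
Proof. by []. Qed.

Lemma realf_id m : realf (fun x : bvec m => x).
Proof. by exists [::]; split. Qed.

Lemma realf_ext m (f g : bvec m -> bvec m) : f =1 g -> realf f -> realf g.
Proof. by move=> e [c [hc e']]; exists c; split=> // x; rewrite e' e. Qed.

Lemma realf_comp m (f g : bvec m -> bvec m) : realf f -> realf g -> realf (fun x => g (f x)).
Proof.
move=> [c1 [h1 e1]] [c2 [h2 e2]]; exists (c1 ++ c2); split; first exact: good_cat.
by move=> x; rewrite circuit_cat e1 e2.
Qed.

Lemma gate_cond m (C : {set 'I_m}) (x y : bvec m) :
  (forall i, i \in C -> x i = y i) -> [forall c in C, x c] = [forall c in C, y c].
Proof.
move=> e; apply/forallP/forallP => h c; apply/implyP => cC;
  have := implyP (h c) cC; by rewrite e.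
Qed.

Lemma gate_inv m (g : gate m) x : gate_ok g -> gate_fun g (gate_fun g x) = x.
Proof.
case: g => C t; rewrite /gate_ok /= => tC; apply/ffunP => i; rewrite !ffunE.
have -> : [forall c in C, gate_fun (C, t) x c] = [forall c in C, x c].
  apply: gate_cond => j jC; rewrite ffunE /=; case: eqP => // ejt.
  by rewrite -ejt jC in tC.
case: eqP => [->|] ; rewrite ?ffunE /= ?eqxx //.
  by rewrite -addbA addbb addbF.
Qed.

Lemma circuit_rev m (c : seq (gate m)) x :
  (forall g, g \in c -> gate_ok g) -> circuit_fun (rev c) (circuit_fun c x) = x.
Proof.
elim: c x => [//|g c IH] x h.
rewrite rev_cons /circuit_fun foldl_rcons -/(circuit_fun _ _) /=.
rewrite -/(circuit_fun c _) IH; last by move=> g' g'c; apply: h; rewrite inE g'c orbT.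
by apply: gate_inv; apply: h; rewrite inE eqxx.
Qed.

Lemma realf_inv m (f : bvec m -> bvec m) : realf f ->
  exists2 g, realf g & cancel f g.
Proof.
move=> [c [hc e]]; exists (circuit_fun (rev c)).
  by exists (rev c); split => //; apply: good_rev.
by move=> x; rewrite -e circuit_rev // => g /hc [].
Qed.

Lemma realf_inj m (f : bvec m -> bvec m) : realf f -> injective f.
Proof. by move/realf_inv => [g _ /can_inj]. Qed.

Lemma realf_gate m (S : {set 'I_m}) t : t \notin S -> #|S| <= 2 -> realf (gate_fun (S, t)).
Proof.
move=> tS hS; exists [:: (S, t)]; split => // g; rewrite inE => /eqP -> //.
Qed.

Lemma circuit_par m (C : {set 'I_m}) (J : seq 'I_m) x : uniq J ->
  (forall j, j \in J -> j \notin C) ->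
  circuit_fun [seq (C, j) | j <- J] x =
  [ffun i => if i \in J then x i (+) [forall c in C, x c] else x i].
Proof.
elim: J x => [|j J IH] x /=.
  by move=> _ _; apply/ffunP => i; rewrite ffunE.
move=> /andP[jJ uJ] hJ; rewrite -/(circuit_fun _ (gate_fun (C, j) x)) IH //; last first.
  by move=> j' j'J; apply: hJ; rewrite inE j'J orbT.
have jC : j \notin C by apply: hJ; rewrite inE eqxx.
have -> : [forall c in C, gate_fun (C, j) x c] = [forall c in C, x c].
  apply: gate_cond => i iC; rewrite ffunE /=; case: eqP => // eij.
  by rewrite -eij iC in jC.
apply/ffunP => i; rewrite !ffunE /= inE.
case: (i =P j) => [->|nij] /=; first by rewrite (negbTE jJ).
by [].
Qed.

Lemma realf_par m (C : {set 'I_m}) (J : seq 'I_m) : uniq J ->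
  (forall j, j \in J -> j \notin C) -> #|C| <= 2 ->
  realf (fun x => [ffun i => if i \in J then x i (+) [forall c in C, x c] else x i]).
Proof.
move=> uJ hJ hC; exists [seq (C, j) | j <- J]; split; last by move=> x; apply: circuit_par.
by move=> g /mapP[j jJ ->]; split => //; apply: hJ.
Qed.

Definition vadd m (v w : bvec m) : bvec m := [ffun i => v i (+) w i].
Definition z0 m : bvec m := [ffun _ => false].
Definition e m (k : 'I_m) : bvec m := [ffun i => i == k].

Lemma realf_trans m (v : bvec m) : realf (vadd v).
Proof.
have := @realf_par m set0 (enum [set j | v j]) (enum_uniq _) (fun j _ => negbT (in_set0 j)).
rewrite cards0 => /(_ isT); apply: realf_ext => x; apply/ffunP => i.
rewrite !ffunE mem_enum inE.
have -> : [forall c in set0, x c] = true by apply/forallP => c; rewrite in_set0.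
by case: (v i) (x i) => [] [].
Qed.

Lemma cond1 m (i : 'I_m) (y : bvec m) : [forall c in [set i], y c] = y i.
Proof.
apply/forallP/idP => [h|yi c]; first by have := h i; rewrite inE eqxx.
by apply/implyP; rewrite inE => /eqP ->.
Qed.

Lemma gate_fix m (C : {set 'I_m}) t (y : bvec m) :
  ~~ [forall c in C, y c] -> gate_fun (C, t) y = y.
Proof.
by move/negbTE=> h; apply/ffunP => i; rewrite ffunE h addbF; case: ifP.
Qed.

Lemma to_unit m (K : {set 'I_m}) (k : 'I_m) (v : bvec m) :
  k \notin K -> (exists i, (i \notin K) && v i) ->
  exists2 f, realf f &
    (f v = e k /\ forall y : bvec m, (forall i, i \notin K -> y i = false) -> f y = y).
Proof.
move=> kK [i /andP[iK vi]].
have [f1 rf1 [f1k f1y]] : exists2 f1, realf f1 &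
    (f1 v k /\ forall y : bvec m, (forall i, i \notin K -> y i = false) -> f1 y = y).
  case vk: (v k); first by exists id => //; apply: realf_id.
  have ik : i != k by apply/eqP => eik; rewrite eik vk in vi.
  exists (gate_fun ([set i], k)).
    by apply: realf_gate; rewrite ?inE 1?eq_sym // cards1.
  split; first by rewrite ffunE eqxx vk cond1 vi.
  by move=> y hy; apply: gate_fix; rewrite cond1 hy.
set w := f1 v in f1k *.
have := @realf_par m [set k] (enum [set j | (j != k) && w j]) (enum_uniq _).
have hJ : forall j, j \in enum [set j | (j != k) && w j] -> j \notin [set k].
  by move=> j; rewrite mem_enum !inE => /andP[].
move=> /(_ hJ); rewrite cards1 => /(_ isT) rf2.
exists (fun x => [ffun i => if i \in enum [set j | (j != k) && w j]
                             then f1 x i (+) [forall c in [set k], f1 x c] else f1 x i]).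
  exact: (realf_comp rf1 rf2).
split.
  apply/ffunP => j; rewrite !ffunE mem_enum !inE cond1 f1k.
  by case: (j =P k) => [->|_] /=; [rewrite f1k | case: (w j)].
move=> y hy; rewrite f1y //; apply/ffunP => j; rewrite ffunE cond1 (hy k kK) addbF.
by case: ifP.
Qed.

Lemma trans3 m (l0 l1 : 'I_m) : l0 != l1 -> forall a b c : bvec m,
  a != b -> a != c -> b != c ->
  exists2 f, realf f & [/\ f a = z0 m, f b = e l0 & f c = e l1].
Proof.
move=> l01 a b c ab ac bc.
have rf0 := realf_trans a.
have f0a : vadd a a = z0 m by apply/ffunP => i; rewrite !ffunE addbb.
have inj0 := realf_inj rf0.
have [f1 rf1 [f1b f1y]] : exists2 f1, realf f1 &
    (f1 (vadd a b) = e l0 /\ forall y : bvec m, (forall i, i \notin set0 -> y i = false) -> f1 y = y).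
  apply: to_unit; first by rewrite in_set0.
  apply/existsP; apply: contraR ab; rewrite negb_exists => /forallP h.
  apply/eqP/inj0; rewrite f0a; apply/ffunP => i; rewrite [RHS]ffunE.
  have := h i; rewrite in_set0 /= !ffunE; by case: (a i) (b i) => [] [].

have f1z : f1 (z0 m) = z0 m by apply: f1y => i; rewrite ffunE.
have inj1 := realf_inj rf1.
set c2 := f1 (vadd a c).
have [f2 rf2 [f2c f2y]] : exists2 f2, realf f2 &
    (f2 c2 = e l1 /\ forall y : bvec m, (forall i, i \notin [set l0] -> y i = false) -> f2 y = y).
  apply: to_unit; first by rewrite inE eq_sym.
  apply/existsP; rewrite -[_ _ _]negbK negb_exists; apply/negP => /forallP h.
  have h' : forall i, i != l0 -> c2 i = false.
    by move=> i il; have := h i; rewrite inE il /=; case: (c2 i).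
  case c2l: (c2 l0).
    move/eqP: bc; apply; apply: inj0; apply: inj1; rewrite -/c2 f1b.
    apply/ffunP => i; rewrite ffunE; case: (i =P l0) => [->//|/eqP /h'//].
  move/eqP: ac; apply; apply: inj0; apply: inj1; rewrite -/c2 f0a f1z.
  apply/ffunP => i; rewrite ffunE; case: (i =P l0) => [->//|/eqP /h'//].
exists (fun x => f2 (f1 (vadd a x))).
  exact: realf_comp (realf_comp rf0 rf1) rf2.
split.
- by rewrite f0a f1z f2y // => i; rewrite ffunE.
- by rewrite f1b f2y // => i; rewrite ffunE inE; case: eqP.
- by [].
Qed.

Definition real_perm m (s : {perm bvec m}) := realf (fun x => s x).

Lemma real_perm1 m : real_perm (1%g : {perm bvec m}).
Proof. by apply: realf_ext (realf_id m) => x; rewrite perm1. Qed.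

Lemma real_permM m (s t : {perm bvec m}) : real_perm s -> real_perm t -> real_perm (s * t)%g.
Proof. by move=> hs ht; apply: realf_ext (realf_comp hs ht) => x; rewrite permM. Qed.

Lemma real_permV m (s : {perm bvec m}) : real_perm s -> real_perm (s^-1)%g.
Proof.
move=> /realf_inv [g rg gK]; apply: realf_ext rg => x.
by rewrite -{1}(permKV s x) gK.
Qed.

Lemma real_permJ m (s t : {perm bvec m}) : real_perm s -> real_perm t -> real_perm (s ^ t)%g.
Proof.
by move=> hs ht; rewrite conjgE; apply: real_permM; [apply: real_permV|apply: real_permM].
Qed.

Lemma perm_of_realf m (f : bvec m -> bvec m) : realf f ->
  exists s : {perm bvec m}, real_perm s /\ s =1 f.
Proof.
move=> rf; exists (perm (realf_inj rf)); split; last exact: permE.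
by apply: realf_ext (rf) => x; rewrite permE.
Qed.

Lemma cond_U m (C D : {set 'I_m}) (x : bvec m) :
  [forall c in C :|: D, x c] = [forall c in C, x c] && [forall c in D, x c].
Proof.
apply/forall_inP/andP => [h|[/forall_inP h1 /forall_inP h2] c].
  by split; apply/forall_inP => c cC; apply: h; rewrite inE cC ?orbT.
by rewrite inE => /orP[/h1|/h2].
Qed.

Lemma cond_gate m (C D : {set 'I_m}) u (x : bvec m) : u \notin D ->
  [forall c in D, gate_fun (C, u) x c] = [forall c in D, x c].
Proof.
move=> uD; apply: gate_cond => i iD; rewrite ffunE /=; case: eqP => // e.
by rewrite -e iD in uD.
Qed.

Lemma gate_funE m (C : {set 'I_m}) t (y : bvec m) :
  gate_fun (C, t) y = [ffun i => if i == t then y i (+) [forall c in C, y c] else y i].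
Proof. by []. Qed.

Lemma comm_gate m (S1 T : {set 'I_m}) v t (x : bvec m) :
  v \in T -> t \notin S1 -> v \notin S1 -> t \notin T ->
  gate_fun (T, t) (gate_fun (S1, v) (gate_fun (T, t) (gate_fun (S1, v) x)))
  = gate_fun (S1 :|: (T :\ v), t) x.
Proof.
move=> vT tS vS tT.
have tv : t != v by apply: contraNneq tT => ->.
have sp : forall y : bvec m, [forall c in T, y c] = [forall c in T :\ v, y c] && y v.
  by move=> y; rewrite -{1}(setD1K vT) setUC cond_U cond1.
have vTv : v \notin T :\ v by rewrite !inE eqxx.
have tTv : t \notin T :\ v by rewrite !inE negb_and tT orbT.
set sg := [forall c in S1, x c]; set rh := [forall c in T :\ v, x c].
have e1 : gate_fun (S1, v) x = [ffun i => if i == v then x i (+) sg else x i] by [].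
have e2 : gate_fun (T, t) (gate_fun (S1, v) x) =
   [ffun i => if i == v then x i (+) sg else if i == t then x i (+) (rh && (x v (+) sg)) else x i].
  rewrite gate_funE sp cond_gate // -/rh; apply/ffunP => i; rewrite !ffunE /= eqxx.
  case: (i =P t) => [->|]; first by rewrite (negbTE tv).
  by case: (i =P v).
have e3 : gate_fun (S1, v) (gate_fun (T, t) (gate_fun (S1, v) x)) =
   [ffun i => if i == t then x i (+) (rh && (x v (+) sg)) else x i].
  rewrite gate_funE cond_gate // cond_gate // -/sg e2.
  apply/ffunP => i; rewrite !ffunE /=.
  case: (i =P v) => [->|]; first by rewrite eq_sym (negbTE tv) -addbA addbb addbF.
  by [].
rewrite gate_funE [RHS]gate_funE sp cond_U !cond_gate // -/rh -/sg e3.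
apply/ffunP => i; rewrite !ffunE /=.
have vt : (v == t) = false by apply/eqP => e; rewrite e eqxx in tv.
rewrite vt; clear e1 e2 e3.
case: (i =P t) => // _.
by case: sg; case: rh; case: (x v); case: (x i).
Qed.

Lemma realM m k : forall (S : {set 'I_m}) t, #|S| <= k -> t \notin S ->
  (#|S| <= 2) || (#|S|.+2 <= m) -> realf (gate_fun (S, t)).
Proof.
elim: k => [|k IH] S t hk tS hc.
  by apply: realf_gate => //; apply: leq_trans hk _.
case: (leqP #|S| 2) => [h2|h3]; first exact: realf_gate.
have hm : #|S|.+2 <= m by move: hc; rewrite leqNgt h3.
have : S != set0 by rewrite -card_gt0; apply: leq_trans h3.
case/set0Pn => s sS.
have : ~~ ([set: 'I_m] \subset t |: S).
  apply/negP => /subset_leq_card; rewrite cardsT card_ord cardsU1.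
  have hb : (t \notin S) + #|S| <= #|S|.+1 by case: (t \notin S).
  by move=> h; have := leq_trans hm (leq_trans h hb); rewrite ltnn.
case/subsetPn => v _; rewrite !inE negb_or => /andP[vt vS].
have ts : t != s by apply: contraNneq tS => ->.
have cS : #|S| = #|S :\ s|.+1 by rewrite (cardsD1 s S) sS.
have rA : realf (gate_fun (S :\ s, v)).
  apply: IH; first by rewrite -ltnS -cS.
    by rewrite !inE negb_and vS orbT.
  by apply/orP; right; apply: leq_trans hm; rewrite cS.
have rB : realf (gate_fun ([set s; v], t)).
  apply: realf_gate; first by rewrite !inE negb_or ts eq_sym vt.
  by rewrite cards2; case: (s != v).
have := realf_comp (realf_comp (realf_comp rA rB) rA) rB.
apply: realf_ext => x; rewrite comm_gate ?inE ?eqxx ?orbT //.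
- congr gate_fun; congr pair; apply/setP => i; rewrite !inE.
  have sv : s != v by apply: contraNneq vS => <-.
  case: (i =P s) => [->|/eqP nis]; first by rewrite sS (negbTE sv).
  by case: (i == v); rewrite /= ?orbF.
- by rewrite (negbTE tS) andbF.
- by rewrite (negbTE vS) andbF.
- by rewrite negb_or ts eq_sym vt.
Qed.

Definition pp m (t w : 'I_m) (bt bw : bool) : bvec m :=
  [ffun i => if i == t then bt else if i == w then bw else true].
Arguments pp : simpl never.

Lemma base_cycle m (t w : 'I_m) (P Q : {set 'I_m}) : t != w ->
  P :|: Q = ~: [set t; w] -> realf (gate_fun (w |: P, t)) -> realf (gate_fun (t |: Q, w)) ->
  real_perm (tperm (pp t w false true) (pp t w true false) *
             tperm (pp t w true false) (pp t w true true))%g.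
Proof.
move=> tw PQ rA rB.
have wt : w != t by rewrite eq_sym.
have hR : forall i, i \in P :|: Q -> (i != t) && (i != w).
  by move=> i; rewrite PQ !inE negb_or.
have hP : forall i, i \in P -> (i != t) && (i != w).
  by move=> i iP; apply: hR; rewrite inE iP.
have hQ : forall i, i \in Q -> (i != t) && (i != w).
  by move=> i iQ; apply: hR; rewrite inE iQ orbT.
have ppt : forall bt bw, pp t w bt bw t = bt by move=> bt bw; rewrite ffunE eqxx.
have ppw : forall bt bw, pp t w bt bw w = bw by move=> bt bw; rewrite ffunE eqxx (negbTE wt).
have ppne : forall bt bw bt' bw', (pp t w bt bw == pp t w bt' bw') = (bt == bt') && (bw == bw').
  move=> bt bw bt' bw'; apply/eqP/andP => [e|[/eqP-> /eqP->]//].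
  by split; apply/eqP; [rewrite -(ppt bt bw) -(ppt bt' bw') e | rewrite -(ppw bt bw) -(ppw bt' bw') e].
have cR : forall bt bw, [forall c in P :|: Q, pp t w bt bw c].
  move=> bt bw; apply/forall_inP => i /hR /andP[it iw]; by rewrite ffunE (negbTE it) (negbTE iw).
have cP : forall bt bw, [forall c in P, pp t w bt bw c].
  by move=> bt bw; have := cR bt bw; rewrite cond_U => /andP[].
have cQ : forall bt bw, [forall c in Q, pp t w bt bw c].
  by move=> bt bw; have := cR bt bw; rewrite cond_U => /andP[].
have gA : forall bt bw, gate_fun (w |: P, t) (pp t w bt bw) = pp t w (bt (+) bw) bw.
  move=> bt bw; apply/ffunP => i; rewrite gate_funE !ffunE cond_U cond1 cP ppw andbT.
  by case: (i == t).
have gB : forall bt bw, gate_fun (t |: Q, w) (pp t w bt bw) = pp t w bt (bw (+) bt).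
  move=> bt bw; apply/ffunP => i; rewrite gate_funE !ffunE cond_U cond1 cQ ppt andbT.
  by case: (i =P w) => [->|]; rewrite ?(negbTE wt) ?eqxx //; case: (i == t).
have okA : t \notin w |: P by rewrite !inE negb_or tw /=; apply/negP => /hP; rewrite eqxx.
have okB : w \notin t |: Q by rewrite !inE negb_or wt /=; apply/negP => /hQ; rewrite eqxx andbF.
have := realf_comp (realf_comp (realf_comp rA rB) rA) rB.
apply: realf_ext => x; rewrite permM.
case cx: [forall c in P :|: Q, x c].
  have -> : x = pp t w (x t) (x w).
    apply/ffunP => i; rewrite ffunE; case: (i =P t) => [->//|/eqP it].
    case: (i =P w) => [->//|/eqP iw].
    by apply: (forall_inP cx); rewrite PQ !inE negb_or it iw.
  case: (x t); case: (x w); rewrite gA /= gB /= gA /= gB /=;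
    first [ by rewrite [X in tperm _ _ X]tpermD ?ppne // tpermR
          | by rewrite [X in tperm _ _ X]tpermR tpermD ?ppne
          | by rewrite [X in tperm _ _ X]tpermL tpermL
          | by rewrite !tpermD ?ppne ].
have nx : forall bt bw, pp t w bt bw != x.
  by move=> bt bw; apply: contraFneq cx => <-.
rewrite !tpermD //.
move: cx; rewrite cond_U; case cPx: [forall c in P, x c] => /= cQx.
  have fB : forall y : bvec m, [forall c in Q, y c] = false -> gate_fun (t |: Q, w) y = y.
    by move=> y hy; apply: gate_fix; rewrite cond_U hy andbF.
  rewrite (fB (gate_fun (w |: P, t) x)); last first.
    by rewrite cond_gate //; apply/negP => /hQ; rewrite eqxx.
  by rewrite gate_inv // fB.
have fA : forall y : bvec m, [forall c in P, y c] = false -> gate_fun (w |: P, t) y = y.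
  by move=> y hy; apply: gate_fix; rewrite cond_U hy andbF.
rewrite (fA x) // (fA (gate_fun (t |: Q, w) x)); last first.
  by rewrite cond_gate //; apply/negP => /hP; rewrite eqxx andbF.
by rewrite gate_inv.
Qed.

Lemma pp_ne m (t w : 'I_m) bt bw bt' bw' : t != w ->
  (pp t w bt bw == pp t w bt' bw') = (bt == bt') && (bw == bw').
Proof.
move=> tw.
have ppt : forall bt bw, pp t w bt bw t = bt by move=> ? ?; rewrite ffunE eqxx.
have ppw : forall bt bw, pp t w bt bw w = bw.
  by move=> ? ?; rewrite ffunE eqxx eq_sym (negbTE tw).
apply/eqP/andP => [e|[/eqP-> /eqP->]//].
by split; apply/eqP; [rewrite -(ppt bt bw) -(ppt bt' bw') e | rewrite -(ppw bt bw) -(ppw bt' bw') e].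
Qed.

Lemma cyc_base m (t w : 'I_m) : t != w ->
  real_perm (tperm (pp t w false true) (pp t w true false) *
             tperm (pp t w true false) (pp t w true true))%g.
Proof.
move=> tw.
have wt : w != t by rewrite eq_sym.
case: (set_0Vmem (~: [set t; w])) => [R0 | [r rR]].
  apply: (@base_cycle m t w set0 set0) => //; first by rewrite setU0 R0.
    by apply: realf_gate; rewrite ?inE ?negb_or ?tw // cardsU1 cards0; case: (w \notin set0).
  by apply: realf_gate; rewrite ?inE ?negb_or ?wt // cardsU1 cards0; case: (t \notin set0).
have hR : #|~: [set t; w]|.+2 = m.
  by have := cardsC [set t; w]; rewrite cards2 tw card_ord add2n.
move: (rR); rewrite !inE negb_or => /andP[rt rw].
apply: (@base_cycle m t w (~: [set t; w] :\ r) [set r]) => //.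
- by rewrite setUC setD1K.
- apply: (@realM m #|w |: (~: [set t; w] :\ r)|) => //.
    by rewrite !inE !negb_or tw /= eqxx /= andbF.
  apply/orP; right; apply: (@leq_trans (#|~: [set t; w]|.+2)); last by rewrite hR.
  rewrite ltnS ltnS cardsU1 (cardsD1 r (~: [set t; w])) rR.
  by case: (w \notin _).
- apply: realf_gate; first by rewrite !inE !negb_or wt eq_sym rw.
  by rewrite cardsU1 cards1; case: (t \notin _).
Qed.

Lemma cyc3 m (t w : 'I_m) : t != w -> forall a b c : bvec m,
  a != b -> a != c -> b != c -> real_perm (tperm a b * tperm b c)%g.
Proof.
move=> tw a b c ab ac bc.
have [f rf [fa fb fc]] := trans3 tw ab ac bc.
have [f' rf' [fa' fb' fc']] := @trans3 m t w tw (pp t w false true) (pp t w true false)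
   (pp t w true true) ltac:(by rewrite pp_ne) ltac:(by rewrite pp_ne) ltac:(by rewrite pp_ne).
have [F [rF eF]] := perm_of_realf rf.
have [F' [rF' eF']] := perm_of_realf rf'.
set g := (F * F'^-1)%g.
have rg : real_perm (g^-1)%g by apply/real_permV/real_permM => //; apply: real_permV.
have hg : forall x y, F x = F' y -> (g^-1)%g y = x.
  by move=> x y e; apply: (perm_inj (s := g)); rewrite permKV permM e permK.
have -> : (tperm a b * tperm b c = (tperm (pp t w false true) (pp t w true false) *
             tperm (pp t w true false) (pp t w true true)) ^ g^-1)%g.
  rewrite conjMg !tpermJ.
  rewrite (hg a (pp t w false true)) ?(hg b (pp t w true false)) ?(hg c (pp t w true true)) //; by rewrite eF eF' ?fa ?fb ?fc ?fa' ?fb' ?fc'.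
exact: real_permJ (cyc_base tw) rg.
Qed.

Lemma even_real m (t w : 'I_m) : t != w ->
  forall s : {perm bvec m}, ~~ odd_perm s -> real_perm s.
Proof.
move=> tw s.
move: {2}#|[set x | s x != x]| (leqnn #|[set x | s x != x]|) => N.
elim: N s => [|N IH] s hN hs.
  have -> : s = 1%g.
    apply/permP => x; rewrite perm1; apply/eqP; apply: contraTT hN => sx.
    by rewrite -ltnNge card_gt0; apply/set0Pn; exists x; rewrite inE.
  exact: real_perm1.
case: (set_0Vmem [set x | s x != x]) => [S0 | [a]].
  have -> : s = 1%g.
    apply/permP => x; rewrite perm1; apply/eqP; apply: contraT => sx.
    have : x \in [set x | s x != x] by rewrite inE.
    by rewrite S0 inE.
  exact: real_perm1.
rewrite inE => sa.
set b := s a.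
have ab : a != b by rewrite eq_sym.
have sb : s b != b.
  by apply: contra sa => /eqP e; apply/eqP; apply: (perm_inj (s := s)); rewrite e.
have [d [da db sd]] : exists d, [/\ d != a, d != b & s d != d].
  case sba: (s b == a); last first.
    exists (s b); split => //; first by rewrite sba.
    by apply: contra sb => /eqP e; apply/eqP; apply: (perm_inj (s := s)).
  suff : [exists d, [&& d != a, d != b & s d != d]].
    by case/existsP => d /and3P[h1 h2 h3]; exists d.
  apply: contraTT hs => /existsPn h.
  have -> : s = tperm a b.
    apply/permP => x; case: (x =P a) => [->|/eqP xa]; first by rewrite tpermL.
    case: (x =P b) => [->|/eqP xb]; first by rewrite tpermR (eqP sba).
    rewrite tpermD 1?eq_sym //; have := h x; rewrite xa xb /=.
    by move/negbNE/eqP.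
  by rewrite odd_tperm ab.
set tau := (tperm a b * tperm b d)%g.
have rtau : real_perm tau by apply: (cyc3 tw); rewrite // eq_sym.
have -> : s = ((s * tau) * tau^-1)%g by rewrite mulgK.
apply: real_permM; last exact: real_permV.
apply: IH; last first.
  by rewrite odd_permM odd_permM !odd_tperm ab eq_sym db addbb addbF.
have sub : [set x | (s * tau)%g x != x] \subset [set x | s x != x] :\ a.
  apply/subsetP => x; rewrite !inE permM /tau permM.
  case: (x =P a) => [->|/eqP xa]; first by rewrite -/b tpermR tpermD ?eqxx // eq_sym.
  rewrite /=; apply: contra => /eqP sx; rewrite sx.
  have xb : x != b by apply: contraNneq sb => <-; rewrite sx.
  have xd : x != d by apply: contraNneq sd => <-; rewrite sx.
  rewrite (@tpermD _ a b x); rewrite 1?eq_sym // (@tpermD _ b d x) 1?eq_sym //.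
have := subset_leq_card sub.
have aS : a \in [set x | s x != x] by rewrite inE.
move: hN; rewrite (cardsD1 a) aS add1n ltnS => h1 h2.
exact: leq_trans h2 h1.
Qed.

Lemma extend (X T : finType) (ph : X -> T) (ps : T -> X) (g : X -> T) :
  cancel ph ps -> injective g ->
  exists h : {perm T}, (forall x, h (ph x) = g x) /\
    (forall z, h z != z -> z \in (ph @: [set: X]) :|: (g @: [set: X])).
Proof.
move=> phK ginj.
set A := ph @: [set: X]; set B := g @: [set: X].
have cA : #|A| = #|X| by rewrite card_imset ?cardsT //; apply: can_inj phK.
have cB : #|B| = #|X| by rewrite card_imset ?cardsT.
set eA := enum (A :\: B); set eB := enum (B :\: A).
have seq_sz : size eB = size eA.
  by rewrite -!cardE !cardsD cA cB setIC.
pose k z := nth z eA (index z eB).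
pose h0 z := if z \in A then g (ps z) else if z \in B then k z else z.
have hAB : forall z, z \in A -> h0 z \in B.
  by move=> z zA; rewrite /h0 zA; apply: imset_f; rewrite inE.
have hBA : forall z, z \notin A -> z \in B -> h0 z \in A :\: B.
  move=> z zA zB; rewrite /h0 (negbTE zA) zB /k -mem_enum -/eA.
  apply: mem_nth; rewrite -seq_sz index_mem mem_enum inE zA zB //.
have Aph : forall z, z \in A -> ph (ps z) = z.
  by move=> z /imsetP[x _ ->]; rewrite phK.
have h0inj : injective h0.
  move=> z1 z2.
  case z1A: (z1 \in A); case z2A: (z2 \in A).
  - rewrite /h0 z1A z2A => /ginj e; by rewrite -(Aph z1) // -(Aph z2) // e.
  - move=> e; have := hAB z1 z1A; rewrite e.
    case z2B: (z2 \in B); first by have := hBA z2 (negbT z2A) z2B; rewrite inE => /andP[/negP].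
    by rewrite /h0 z2A z2B z2B.
  - move=> e; have := hAB z2 z2A; rewrite -e.
    case z1B: (z1 \in B); first by have := hBA z1 (negbT z1A) z1B; rewrite inE => /andP[/negP].
    by rewrite /h0 z1A z1B z1B.
  case z1B: (z1 \in B); case z2B: (z2 \in B).
  - rewrite /h0 z1A z2A z1B z2B /k => e.
    have i1 : index z1 eB < size eA by rewrite -seq_sz index_mem mem_enum inE z1A z1B.
    have i2 : index z2 eB < size eA by rewrite -seq_sz index_mem mem_enum inE z2A z2B.
    move/eqP: e; rewrite (set_nth_default z1 z2 i2) nth_uniq ?enum_uniq // => /eqP e.
    move/eqP: e => /eqP e.
    have m1 : z1 \in eB by rewrite mem_enum inE z1A z1B.
    have m2 : z2 \in eB by rewrite mem_enum inE z2A z2B.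
    by rewrite -(nth_index z1 m1) e nth_index.
  - move=> e; have := hBA z1 (negbT z1A) z1B; rewrite e /h0 z2A z2B !inE z2A andbF.
    by [].
  - move=> e; have := hBA z2 (negbT z2A) z2B; rewrite -e /h0 z1A z1B !inE z1A andbF.
    by [].
  - by rewrite /h0 z1A z2A z1B z2B.
exists (perm h0inj); split.
  by move=> x; rewrite permE /h0 imset_f ?inE // phK.
move=> z; rewrite permE /h0 inE; case: (z \in A) => //; case: (z \in B) => //.
by rewrite eqxx.
Qed.

Definition join n q (y : bvec n) (a : bvec q) : bvec (n + q) :=
  [ffun i => match split i with inl j => y j | inr k => a k end].
Definition jsnd n q (z : bvec (n + q)) : bvec q := [ffun k => z (rshift n k)].

Lemma psi_join n q (y : bvec n) (a : bvec q) : psi n q (join y a) = y.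
Proof.
apply/ffunP => j; rewrite !ffunE.
by rewrite (unsplitK (inl _ j) : split (lshift q j) = inl j).
Qed.

Lemma jsnd_join n q (y : bvec n) (a : bvec q) : jsnd (join y a) = a.
Proof.
apply/ffunP => k; rewrite !ffunE.
by rewrite (unsplitK (inr _ k) : split (rshift n k) = inr k).
Qed.

Lemma phi_join n q (x : bvec n) : phi n q x = join x (z0 q).
Proof. by apply/ffunP => i; rewrite !ffunE; case: split => // k; rewrite ffunE. Qed.

Lemma phiK n q : cancel (phi n q) (psi n q).
Proof. by move=> x; rewrite phi_join psi_join. Qed.

Lemma psi_tperm n q (u v y : bvec (n + q)) : psi n q u = psi n q v ->
  psi n q (tperm u v y) = psi n q y.
Proof.
move=> e; case: (y =P u) => [->|/eqP yu]; first by rewrite tpermL.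
case: (y =P v) => [->|/eqP yv]; first by rewrite tpermR.
by rewrite tpermD 1?eq_sym.
Qed.

Lemma partA n q (f : bvec n -> bvec n) : 1 <= n -> 0 < q <= n ->
  (forall y : bvec n, #|[set x | f x == y]| <= 2 ^ q) ->
  exists h : {perm bvec (n + q)},
      ~~ odd_perm h /\
      #|[set z | h z != z]| <= 2 ^ n.+1 /\
      (forall x : bvec n, psi n q (h (phi n q x)) = f x).
Proof.
move=> hn /andP[hq0 hqn] hf.
have cq : #|{: bvec q}| = 2 ^ q by rewrite card_ffun card_bool card_ord.
have cn : #|{: bvec n}| = 2 ^ n by rewrite card_ffun card_bool card_ord.
pose P x := enum [set x' | f x' == f x].
pose a x : bvec q := nth (z0 q) (enum [set: bvec q]) (index x (P x)).
pose g x := join (f x) (a x).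
have sz : forall x, index x (P x) < size (enum [set: bvec q]).
  move=> x; rewrite -cardE cardsT cq; apply: leq_trans (hf (f x)).
  by rewrite cardE index_mem mem_enum inE.
have ginj : injective g.
  move=> x1 x2 e.
  have ef : f x1 = f x2 by have := congr1 (@psi n q) e; rewrite !psi_join.
  have ea : a x1 = a x2 by have := congr1 (@jsnd n q) e; rewrite !jsnd_join.
  have eP : P x1 = P x2 by rewrite /P ef.
  move: ea; rewrite /a => /eqP; rewrite nth_uniq ?enum_uniq ?sz // eP => /eqP ei.
  have m1 : x1 \in P x2 by rewrite mem_enum inE ef.
  by rewrite -(nth_index x1 m1) ei nth_index // mem_enum inE.
have [h0 [h0phi h0sup]] := extend (@phiK n q) ginj.
set A := phi n q @: [set: bvec n]; set B := g @: [set: bvec n].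
have cA : #|A| <= 2 ^ n by rewrite -cn -cardsT leq_imset_card.
have cB : #|B| <= 2 ^ n by rewrite -cn -cardsT leq_imset_card.
have cAB : #|A :|: B| <= 2 ^ n.+1.
  rewrite cardsU; apply: leq_trans (leq_subr _ _) _; rewrite expnS mul2n -addnn.
  exact: leq_add.
have hpsi0 : forall x, psi n q (h0 (phi n q x)) = f x by move=> x; rewrite h0phi psi_join.
have sub0 : [set z | h0 z != z] \subset A :|: B.
  by apply/subsetP => z; rewrite inE; apply: h0sup.
case odd0: (odd_perm h0); last first.
  exists h0; split; first by rewrite odd0.
  split => //; exact: leq_trans (subset_leq_card sub0) cAB.
case: (leqP 2 #|A :\: B|) => [c2 | c1].
  have [u [v [uAB vAB uv]]] : exists u v, [/\ u \in A :\: B, v \in A :\: B & u != v].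
    by apply/card_gt1P.
  move: uAB vAB; rewrite !inE => /andP[uB uA] /andP[vB vA].
  exists (h0 * tperm u v)%g; split.
    by rewrite odd_permM odd_tperm uv odd0.
  split.
    apply: leq_trans _ cAB; apply: subset_leq_card; apply/subsetP => z.
    rewrite inE permM; case: (h0 z =P z) => [e|/eqP ne]; last by move=> _; apply: h0sup.
    rewrite e; case: (z =P u) => [->|/eqP zu]; first by rewrite inE uA.
    case: (z =P v) => [->|/eqP zv]; first by rewrite inE vA.
    by rewrite tpermD 1?eq_sym // eqxx.
  move=> x; rewrite permM h0phi tpermD ?psi_join //.
    by apply: contraNneq uB => ->; apply: imset_f; rewrite inE.
  by apply: contraNneq vB => ->; apply: imset_f; rewrite inE.
pose u := join (z0 n) (z0 q); pose v := join (z0 n) ([ffun _ => true] : bvec q).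
have uv : u != v.
  apply/eqP => e; have := congr1 (fun z => jsnd z (Ordinal hq0)) e.
  by rewrite /= !jsnd_join !ffunE.
exists (h0 * tperm u v)%g; split.
  by rewrite odd_permM odd_tperm uv odd0.
split; last first.
  by move=> x; rewrite permM psi_tperm ?hpsi0 // !psi_join.
have sub : [set z | (h0 * tperm u v)%g z != z] \subset (A :|: B) :|: [set u; v].
  apply/subsetP => z; rewrite inE permM.
  case: (h0 z =P z) => [e|/eqP ne]; last by move=> _; rewrite inE h0sup.
  rewrite e; case: (z =P u) => [->|/eqP zu]; first by rewrite !inE eqxx orbT.
  case: (z =P v) => [->|/eqP zv]; first by rewrite !inE eqxx !orbT.
  by rewrite tpermD 1?eq_sym // eqxx.
have c3 : #|[set z | (h0 * tperm u v)%g z != z]| <= 2 ^ n + 3.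
  apply: leq_trans (subset_leq_card sub) _.
  rewrite cardsU; apply: leq_trans (leq_subr _ _) _; rewrite cards2.
  have : #|A :|: B| <= #|A :\: B| + #|B|.
    apply: leq_trans (_ : #|(A :\: B) :|: B| <= _).
      apply: subset_leq_card; apply/subsetP => z; rewrite !inE.
      by case: (z \in A); case: (z \in B).
    by rewrite cardsU leq_subr.
  rewrite uv /= => hh; move: hh c1 cB; move: #|A :|: B| #|A :\: B| #|B| (2 ^ n) => X Y Z W; lia.
have cT : #|[set z | (h0 * tperm u v)%g z != z]| <= 2 ^ (n + q).
  by apply: leq_trans (max_card _) _; rewrite card_ffun card_bool card_ord.
case: (ltnP 1 n) => [n2|n1].
  have h4 : 4 <= 2 ^ n by exact: (@leq_pexp2l 2 2 n isT n2).
  rewrite expnS; move: h4 c3; move: #|[set z | (h0 * tperm u v)%g z != z]| (2 ^ n) => X W; lia.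
have en : n = 1 by lia.
have eq : q = 1 by lia.
by move: cT; move: #|[set z | (h0 * tperm u v)%g z != z]| => X; rewrite en eq.
Qed.

Theorem mainTheorem2 (n q : nat) (f : bvec n -> bvec n) :
  1 <= n -> 0 < q <= n ->
  (forall y : bvec n, #|[set x | f x == y]| <= 2 ^ q) ->
  (exists h : {perm bvec (n + q)},
      ~~ odd_perm h /\
      #|[set z | h z != z]| <= 2 ^ n.+1 /\
      (forall x : bvec n, psi n q (h (phi n q x)) = f x))
  /\ F n q f.
Proof.
move=> hn hq hf.
have [h [hev [hc hp]]] := partA hn hq hf.
split; first by exists h.
have hm : 1 < n + q by move/andP: hq => [hq0 _]; lia.
have tw : (Ordinal (ltnW hm) : 'I_(n + q)) != Ordinal hm by [].
have [c [gc ec]] := even_real tw hev.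
exists c; split; first by move=> g /gc.
by move=> x; rewrite ec hp.
Qed.
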